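(* Let $\Gamma$ be a group and $\sigma\in\mathrm{Aut}(\Gamma)$ such that $\Gamma\rtimes_\sigma\mathbb Z$ is finitely generated, and let $G$ be a finite group. Then (i) $\mathrm{Hom}_\sigma(\Gamma,G)$ is finite, and (ii) $\frac{1}{|G|}\#\mathrm{Hom}(\Gamma\rtimes_\sigma\mathbb Z,G)=\#\big(\mathrm{Hom}_\sigma(\Gamma,G)/G\big)$; in particular $|G|$ divides $\#\mathrm{Hom}(\Gamma\rtimes_\sigma\mathbb Z,G)$.
   Context: $G$ acts on $\mathrm{Hom}(\Gamma,G)$ by conjugation, $(h\cdot\phi)(\gamma)=h\phi(\gamma)h^{-1}$. For $\sigma\in\mathrm{Aut}(\Gamma)$ set $\phi^\sigma(\gamma)=\phi(\sigma^{-1}\gamma)$, and let $\mathrm{Hom}_\sigma(\Gamma,G)$ be the set of $\phi\in\mathrm{Hom}(\Gamma,G)$ with $\phi^\sigma$ conjugate to $\phi$ by an element of $G$; it is stable under the $G$-action and $\mathrm{Hom}_\sigma(\Gamma,G)/G$ denotes its set of orbits. $\Gamma\rtimes_\sigma\mathbb Z$ is the semidirect product where the generator $1\in\mathbb Z$ acts on $\Gamma$ by $\sigma$. *)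

(* Defs.v *)
From Stdlib Require Import ZArith List.
From mathcomp Require Import all_boot all_fingroup.

Set Implicit Arguments.
Unset Strict Implicit.
Unset Printing Implicit Defensive.

Record Grp := {
  gcar :> Type;
  gmul : gcar -> gcar -> gcar;
  gone : gcar;
  ginv : gcar -> gcar;
  gmulA : forall x y z, gmul x (gmul y z) = gmul (gmul x y) z;
  gmul1 : forall x, gmul gone x = x;
  gmulV : forall x, gmul (ginv x) x = gone }.

Record GrpAut (Γ : Grp) := {
  afun : Γ -> Γ;
  ainv : Γ -> Γ;
  afunK : cancel afun ainv;
  ainvK : cancel ainv afun;
  afunM : forall x y, afun (gmul x y) = gmul (afun x) (afun y) }.

Definition autpow (Γ : Grp) (s : GrpAut Γ) (m : Z) : Γ -> Γ :=
  match m with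
  | Z0 => id
  | Zpos p => ssrnat.iter (Pos.to_nat p) (afun s)
  | Zneg p => ssrnat.iter (Pos.to_nat p) (ainv s)
  end.

(* The semidirect product Gamma ⋊_sigma Z on Gamma * Z:
   (g,m)(h,n) = (g sigma^m(h), m+n); so t γ t^-1 = sigma(γ) for t = (1,1). *)
Definition sd_mul (Γ : Grp) (s : GrpAut Γ) (x y : Γ * Z) : Γ * Z :=
  (gmul x.1 (autpow s x.2 y.1), (x.2 + y.2)%Z).
Definition sd_one (Γ : Grp) : Γ * Z := (gone Γ, 0%Z).
Definition sd_inv (Γ : Grp) (s : GrpAut Γ) (x : Γ * Z) : Γ * Z :=
  (autpow s (- x.2) (ginv x.1), (- x.2)%Z).

Inductive generated (T : Type) (mul : T -> T -> T) (one : T) (inv : T -> T)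
    (S : list T) : T -> Prop :=
  | gen_in : forall x, List.In x S -> generated mul one inv S x
  | gen_one : generated mul one inv S one
  | gen_mul : forall x y, generated mul one inv S x ->
      generated mul one inv S y -> generated mul one inv S (mul x y)
  | gen_inv : forall x, generated mul one inv S x ->
      generated mul one inv S (inv x).

Definition fingen (T : Type) (mul : T -> T -> T) (one : T) (inv : T -> T) :=
  exists S : list T, forall x, generated mul one inv S x.

Definition is_hom (T : Type) (mul : T -> T -> T) (gT : finGroupType)
    (f : T -> gT) : Prop :=
  forall x y, f (mul x y) = (f x * f y)%g.

Definition conj_hom (T : Type) (gT : finGroupType) (h : gT) (phi : T -> gT) :
  T -> gT := fun t => (h * phi t * h^-1)%g.

Definition twist (Γ : Grp) (s : GrpAut Γ) (gT : finGroupType) (phi : Γ -> gT) :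
  Γ -> gT := fun g => phi (ainv s g).

Definition conj_equiv (T : Type) (gT : finGroupType) (phi psi : T -> gT) :=
  exists h : gT, psi = conj_hom h phi.

Definition Hom_sigma (Γ : Grp) (s : GrpAut Γ) (gT : finGroupType)
    (phi : Γ -> gT) : Prop :=
  is_hom (@gmul Γ) phi /\ conj_equiv phi (twist s phi).

Definition finite_pred (T : Type) (P : T -> Prop) :=
  exists l : list T, forall x, P x -> List.In x l.

Definition has_card (T : Type) (P : T -> Prop) (n : nat) :=
  exists l : list T, List.NoDup l /\ length l = n /\
    forall x, P x <-> List.In x l.

(* The set of orbits of R (an equivalence) restricted to P has m elements:
   there is a transversal of size m. *)
Definition num_orbits (T : Type) (P : T -> Prop) (R : T -> T -> Prop)
    (m : nat) :=
  exists l : list T, length l = m /\ List.Forall P l /\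
    (forall x, P x -> exists y, List.In y l /\ R x y) /\
    (forall i j y z, List.nth_error l i = Some y ->
       List.nth_error l j = Some z -> R y z -> i = j).

(* Main.v *)
Require Import Defs.
From Stdlib Require Import ZArith List Lia.
From mathcomp Require Import all_boot all_fingroup.
From mathcomp Require Import boolp.
Set Implicit Arguments. Unset Strict Implicit. Unset Printing Implicit Defensive.

Section GrpFacts.
Variable Γ : Grp.
Implicit Types x y z : Γ.

Lemma gmulV' x : gmul x (ginv x) = gone Γ.
Proof.
have idem : gmul (gmul x (ginv x)) (gmul x (ginv x)) = gmul x (ginv x).
  by rewrite -gmulA (gmulA (ginv x)) gmulV gmul1.
transitivity (gmul (gmul (ginv (gmul x (ginv x))) (gmul x (ginv x))) (gmul x (ginv x))).
  by rewrite gmulV gmul1.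
by rewrite -gmulA idem gmulV.
Qed.

Lemma gmul1r x : gmul x (gone Γ) = x.
Proof. by rewrite -(gmulV x) gmulA gmulV' gmul1. Qed.

Lemma gmulI x y z : gmul x y = gmul x z -> y = z.
Proof. by move=> h; rewrite -(gmul1 y) -(gmul1 z) -(gmulV x) -!gmulA h. Qed.

Lemma hom_one (f : Γ -> Γ) : (forall x y, f (gmul x y) = gmul (f x) (f y)) ->
  f (gone Γ) = gone Γ.
Proof.
move=> fM; apply: (@gmulI (f (gone Γ))); rewrite -fM gmul1 gmul1r //.
Qed.
End GrpFacts.

Section AutFacts.
Variables (Γ : Grp) (s : GrpAut Γ).

Lemma ainvM x y : ainv s (gmul x y) = gmul (ainv s x) (ainv s y).
Proof.
apply: (can_inj (afunK s)); by rewrite afunM !ainvK.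
Qed.

Lemma iterM (f : Γ -> Γ) : (forall x y, f (gmul x y) = gmul (f x) (f y)) ->
  forall n x y, iter n f (gmul x y) = gmul (iter n f x) (iter n f y).
Proof. by move=> fM; elim=> [|n IH] x y //=; rewrite IH fM. Qed.

Lemma autpowM m x y : autpow s m (gmul x y) = gmul (autpow s m x) (autpow s m y).
Proof.
case: m => [|p|p] //=; apply: iterM => *; [exact: afunM | exact: ainvM].
Qed.

Lemma autpow1 m : autpow s m (gone Γ) = gone Γ.
Proof. apply: hom_one; exact: autpowM. Qed.

Lemma sd_mulV (x : Γ * Z) : sd_mul s (sd_inv s x) x = sd_one Γ.
Proof.
rewrite /sd_mul /sd_inv /sd_one /= -autpowM gmulV autpow1.
by rewrite Z.add_opp_diag_l.
Qed.

Lemma sd_mul11 : sd_mul s (sd_one Γ) (sd_one Γ) = sd_one Γ.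
Proof. by rewrite /sd_mul /sd_one /= gmul1. Qed.
End AutFacts.

Section HomFacts.
Variables (T : Type) (mul : T -> T -> T) (one : T) (inv : T -> T) (gT : finGroupType).
Hypothesis mul11 : mul one one = one.
Hypothesis mulV : forall x, mul (inv x) x = one.
Variable f : T -> gT.
Hypothesis fM : is_hom mul f.

Lemma hom1 : f one = 1%g.
Proof.
apply: (@mulgI _ (f one)); by rewrite -fM mul11 mulg1.
Qed.

Lemma homV x : f (inv x) = (f x)^-1%g.
Proof.
apply: (@mulIg _ (f x)); by rewrite -fM mulV hom1 mulVg.
Qed.

End HomFacts.

Lemma hom_gen (T : Type) (mul : T -> T -> T) (one : T) (inv : T -> T) (gT : finGroupType)
  (mul11 : mul one one = one) (mulV : forall x, mul (inv x) x = one)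
  (f g : T -> gT) S : is_hom mul f -> is_hom mul g ->
  (forall x, List.In x S -> f x = g x) ->
  forall x, Defs.generated mul one inv S x -> f x = g x.
Proof.
move=> fM gM eqS x; elim => [y /eqS //||y z _ IHy _ IHz|y _ IH].
- by rewrite (hom1 mul11 fM) (hom1 mul11 gM).
- by rewrite fM gM IHy IHz.
- by rewrite (homV mul11 mulV fM) (homV mul11 mulV gM) IH.
Qed.

Section Fin.
Variables (Γ : Grp) (s : GrpAut Γ) (gT : finGroupType).
Variable S : list (Γ * Z).
Hypothesis HS : forall x, Defs.generated (sd_mul s) (sd_one Γ) (sd_inv s) S x.

Definition code (ψ : (Γ * Z)%type -> gT) : {ffun 'I_(length S) -> gT} :=
  [ffun i : 'I_(length S) => ψ (List.nth i S (sd_one Γ))].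

Lemma code_inj ψ1 ψ2 : is_hom (sd_mul s) ψ1 -> is_hom (sd_mul s) ψ2 ->
  code ψ1 = code ψ2 -> ψ1 = ψ2.
Proof.
move=> h1 h2 ec; apply: funext => x.
apply: (hom_gen (sd_mul11 s) (@sd_mulV _ s) h1 h2 _ (HS x)) => y /(In_nth _ _ (sd_one Γ)).
case=> i [/ltP lti <-].
by have := congr1 (fun f : {ffun _ -> _} => f (Ordinal lti)) ec; rewrite !ffunE.
Qed.

Definition dec (c : {ffun 'I_(length S) -> gT}) : option ((Γ * Z)%type -> gT) :=
  match pselect (exists ψ, is_hom (sd_mul s) ψ /\ code ψ = c) with
  | left e => Some (proj1_sig (cid e))
  | right _ => None end.

Lemma homs_fin : exists l : seq ((Γ * Z)%type -> gT),
  forall ψ, is_hom (sd_mul s) ψ <-> ψ \in l.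
Proof.
exists (pmap dec (enum {ffun 'I_(length S) -> gT})) => ψ.
rewrite mem_pmap; split.
- move=> hψ; apply/mapP; exists (code ψ); first by rewrite mem_enum.
  rewrite /dec; case: pselect => [e|]; last by case; exists ψ.
  case: (cid e) => ψ' [h' c'] /=; congr Some; exact: code_inj.
- case/mapP => c _; rewrite /dec; case: pselect => // e [->].
  by case: (cid e) => ψ' [].
Qed.
End Fin.

Module CC.
Local Open Scope group_scope.

Section Zpow.
Variable gT : finGroupType.
Definition zpow (g : gT) (m : Z) : gT :=
  match m with Z0 => 1 | Zpos p => g ^+ Pos.to_nat p | Zneg p => g ^- Pos.to_nat p end.

Lemma zpow_nat g n : zpow g (Z.of_nat n) = g ^+ n.
Proof. by case: n => [|n] //=; rewrite SuccNat2Pos.id_succ. Qed.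

Lemma zpow_negnat g n : zpow g (- Z.of_nat n) = g ^- n.
Proof. by case: n => [|n] /=; [rewrite invg1 | rewrite SuccNat2Pos.id_succ]. Qed.

Lemma Zsplit (m : Z) : exists n, m = Z.of_nat n \/ m = (- Z.of_nat n)%Z.
Proof. exists (Z.abs_nat m); lia. Qed.

Lemma zpowS g k : zpow g (k + 1) = zpow g k * g.
Proof.
have [n [->|->]] := Zsplit k.
  have -> : (Z.of_nat n + 1 = Z.of_nat n.+1)%Z by lia.
  by rewrite !zpow_nat expgSr.
case: n => [|n]; first by rewrite /= mul1g expg1.
have -> : (- Z.of_nat n.+1 + 1 = - Z.of_nat n)%Z by lia.
by rewrite !zpow_negnat expgS invMg -mulgA mulVg mulg1.
Qed.

Lemma zpowD g m n : zpow g (m + n) = zpow g m * zpow g n.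
Proof.
elim/Z.peano_ind: n => [|n IH|n IH].
- by rewrite Z.add_0_r mulg1.
- by rewrite -!Z.add_1_r Z.add_assoc !zpowS IH mulgA.
- have e1 := zpowS g (m + Z.pred n); have e2 := zpowS g (Z.pred n).
  rewrite -Z.add_assoc Z.add_1_r Z.succ_pred IH in e1.
  rewrite Z.add_1_r Z.succ_pred in e2.
  apply: (@mulIg _ g); by rewrite -e1 e2 mulgA.
Qed.
End Zpow.

Section Ext.
Variables (Γ : Grp) (s : GrpAut Γ) (gT : finGroupType).

Definition cond (φ : Γ -> gT) (g : gT) := forall δ, φ (afun s δ) * g = g * φ δ.
Definition ext (φ : Γ -> gT) (g : gT) : (Γ * Z)%type -> gT :=
  fun x => φ x.1 * zpow g x.2.
Definition res (ψ : (Γ * Z)%type -> gT) : Γ -> gT := fun γ => ψ (γ, 0%Z).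

Lemma autpow_nat n δ : autpow s (Z.of_nat n) δ = iter n (afun s) δ.
Proof. by case: n => [|n] //=; rewrite SuccNat2Pos.id_succ. Qed.

Lemma autpow_negnat n δ : autpow s (- Z.of_nat n) δ = iter n (ainv s) δ.
Proof. by case: n => [|n] //=; rewrite SuccNat2Pos.id_succ. Qed.

Lemma iter_afun_ainv n δ : iter n (afun s) (iter n (ainv s) δ) = δ.
Proof. by elim: n => [|n IH] //; rewrite iterSr iterS ainvK. Qed.

Variable φ : Γ -> gT.
Hypothesis hφ : is_hom (@gmul Γ) φ.

Lemma key_pos g : cond φ g -> forall n δ, φ (iter n (afun s) δ) * g ^+ n = g ^+ n * φ δ.
Proof.
move=> c; elim=> [|n IH] δ; first by rewrite mulg1 mul1g.
by rewrite iterS expgS mulgA c -mulgA IH mulgA.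
Qed.

Lemma key g : cond φ g -> forall m δ, φ (autpow s m δ) * zpow g m = zpow g m * φ δ.
Proof.
move=> c m δ; have [n [->|->]] := Zsplit m.
  by rewrite autpow_nat zpow_nat key_pos.
rewrite autpow_negnat zpow_negnat.
have := key_pos c n (iter n (ainv s) δ); rewrite iter_afun_ainv => H.
have -> : φ (iter n (ainv s) δ) = (g ^+ n)^-1 * (φ δ * g ^+ n) by rewrite H mulKg.
by rewrite -mulgA mulgK.
Qed.

Lemma ext_hom g : cond φ g -> is_hom (sd_mul s) (ext φ g).
Proof.
move=> c x y; rewrite /ext /sd_mul /= hφ zpowD.
by rewrite !mulgA -(mulgA (φ x.1)) key // !mulgA.
Qed.

Lemma phi1 : φ (gone Γ) = 1.
Proof. exact: (hom1 (gmul1 _) hφ). Qed.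

Lemma ext_res g : res (ext φ g) = φ.
Proof. by apply: funext => γ; rewrite /res /ext /= mulg1. Qed.

Lemma ext_t g : ext φ g (gone Γ, 1%Z) = g.
Proof. by rewrite /ext /= phi1 mul1g expg1. Qed.

Lemma twist_cond : conj_equiv φ (twist s φ) <-> exists g, cond φ g.
Proof.
split.
- case=> h e; exists h^-1 => δ.
  have := congr1 (fun f => f (afun s δ)) e; rewrite /twist /conj_hom afunK => ->.
  by rewrite -!mulgA mulKg.
- case=> g c; exists g^-1; apply: funext => γ; rewrite /twist /conj_hom invgK.
  have := c (ainv s γ); rewrite ainvK -mulgA => ->; by rewrite mulKg.
Qed.
End Ext.

Section Res.
Variables (Γ : Grp) (s : GrpAut Γ) (gT : finGroupType).
Variable ψ : (Γ * Z)%type -> gT.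
Hypothesis hψ : is_hom (sd_mul s) ψ.

Lemma res_hom : is_hom (@gmul Γ) (res ψ).
Proof. by move=> x y; rewrite /res -hψ. Qed.

Lemma res_cond : cond s (res ψ) (ψ (gone Γ, 1%Z)).
Proof.
move=> δ; rewrite /res -!hψ /sd_mul /= gmul1 gmul1r //.
Qed.

Lemma psi_t m : ψ (gone Γ, m) = zpow (ψ (gone Γ, 1%Z)) m.
Proof.
have S m' : ψ (gone Γ, (m' + 1)%Z) = ψ (gone Γ, m') * ψ (gone Γ, 1%Z).
  by rewrite -hψ /sd_mul /= autpow1 gmul1.
elim/Z.peano_ind: m => [|m IH|m IH].
- exact: (hom1 (sd_mul11 s) hψ).
- by rewrite -Z.add_1_r S IH zpowS.
- have e1 := S (Z.pred m); have e2 := zpowS (ψ (gone Γ, 1%Z)) (Z.pred m).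
  rewrite Z.add_1_r Z.succ_pred IH in e1. rewrite Z.add_1_r Z.succ_pred e1 in e2.
  exact: (mulIg _ _ _ e2).
Qed.

Lemma ext_of_res : ext (res ψ) (ψ (gone Γ, 1%Z)) = ψ.
Proof.
apply: funext => -[γ m]; rewrite /ext /res /= -psi_t -hψ /sd_mul /= gmul1r //.
Qed.
End Res.

End CC.
Import CC.
Module D.
Local Open Scope group_scope.

Lemma In_mem (T : eqType) (x : T) (l : seq T) : List.In x l <-> x \in l.
Proof.
elim: l => [|y l IH] /=; first by split.
rewrite in_cons IH; split; first by case=> [->|->]; rewrite ?eqxx ?orbT.
by case/orP => [/eqP ->|h]; [left|right].
Qed.

Lemma uniq_NoDup (T : eqType) (l : seq T) : uniq l -> List.NoDup l.
Proof.
elim: l => [|y l IH] /=; first by constructor.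
case/andP => ny u; constructor; last exact: IH.
by move/In_mem; apply/negP.
Qed.

Section Main.
Variables (Γ : Grp) (s : GrpAut Γ) (gT : finGroupType).
Variable lH : seq ((Γ * Z)%type -> gT).
Hypothesis HlH : forall ψ, is_hom (sd_mul s) ψ <-> ψ \in lH.

Definition ls := undup (map (@res Γ gT) lH).

Lemma HomS_iff (φ : Γ -> gT) : Hom_sigma s φ <-> is_hom (@gmul Γ) φ /\ exists g, cond s φ g.
Proof.
split; case=> h1 h2; split => //; by apply/(twist_cond s).
Qed.

Lemma mem_ls (φ : Γ -> gT) : Hom_sigma s φ <-> φ \in ls.
Proof.
rewrite HomS_iff mem_undup; split.
- case=> h [g c]; apply/mapP; exists (ext φ g); last by rewrite ext_res.
  exact/HlH/ext_hom.
- case/mapP => ψ /HlH hψ ->; split; first exact: res_hom.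
  by exists (ψ (gone Γ, 1%Z)); apply: res_cond.
Qed.

Lemma conj_stable (φ : Γ -> gT) a : Hom_sigma s φ -> Hom_sigma s (conj_hom a φ).
Proof.
rewrite !HomS_iff; case=> h [g c]; split.
  by move=> x y; rewrite /conj_hom h !mulgA mulgKV.
exists (a * g * a^-1) => δ; rewrite /conj_hom !mulgA !mulgKV.
by rewrite -(mulgA a (φ _) g) c !mulgA.
Qed.

Definition X := seq_sub ls.

Definition to (x : X) (a : gT) : X := insubd x (conj_hom a^-1 (val x)).

Lemma to_val x a : val (to x a) = conj_hom a^-1 (val x).
Proof.
apply: insubdK; apply/mem_ls/conj_stable/mem_ls; exact: valP.
Qed.

Lemma to1 : to^~ 1 =1 id.
Proof.
move=> x; apply: val_inj; rewrite to_val; apply: funext => t.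
by rewrite /conj_hom invg1 mul1g invg1 mulg1.
Qed.

Lemma toM x : act_morph to x.
Proof.
move=> a b; apply: val_inj; rewrite !to_val; apply: funext => t.
by rewrite /conj_hom !invgK invMg !mulgA.
Qed.

Definition act := TotalAction to1 toM.


Lemma val_hom (x : X) : is_hom (@gmul Γ) (val x).
Proof. by have /mem_ls/HomS_iff[] := valP x. Qed.

Lemma val_cond (x : X) : exists g, cond s (val x) g.
Proof. by have /mem_ls/HomS_iff[] := valP x. Qed.

Definition condb (x : X) (g : gT) : bool := `[< cond s (val x) g >].
Definition C : {set X * gT} := [set p | condb p.1 p.2].
Definition f (p : X * gT) := ext (val p.1) p.2.
Definition lH' := [seq f p | p <- enum C].

Lemma mem_lH' ψ : is_hom (sd_mul s) ψ <-> ψ \in lH'.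
Proof.
split.
- move=> hψ.
  have m : res ψ \in ls.
    apply/mem_ls/HomS_iff; split; first exact: res_hom.
    by exists (ψ (gone Γ, 1%Z)); apply: res_cond.
  apply/mapP; exists (Sub (res ψ) m, ψ (gone Γ, 1%Z)).
    rewrite mem_enum inE /condb /=; apply/asboolP; exact: res_cond.
  by rewrite /f /= (ext_of_res hψ).
- case/mapP => p; rewrite mem_enum inE /condb => /asboolP c ->.
  exact (ext_hom (val_hom p.1) c).
Qed.

Lemma uniq_lH' : uniq lH'.
Proof.
rewrite map_inj_in_uniq ?enum_uniq // => p q _ _ e.
have e1 := congr1 (@res Γ gT) e; rewrite /f !ext_res in e1.
have e2 := congr1 (fun ψ => ψ (gone Γ, 1%Z)) e; rewrite /f /= !ext_t in e2; try exact: val_hom.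
move: p q e e1 e2 => [x g] [y h] _ /= e1 ->; congr pair; exact: val_inj.
Qed.

Lemma card_C : #|C| = \sum_(x : X) #|[set g | condb x g]|.
Proof.
rewrite -sum1_card (eq_bigl (fun p => xpredT p.1 && condb p.1 p.2)); last by move=> p; rewrite inE.
rewrite -(pair_big_dep xpredT condb (fun _ _ => 1%N)).
by apply: eq_bigr => x _; rewrite -sum1_card; apply: eq_bigl => g; rewrite inE.
Qed.

Lemma stab_iff (φ : Γ -> gT) c : conj_hom c^-1 φ = φ <-> forall t, φ t * c = c * φ t.
Proof.
split.
- move=> e t; rewrite -{2}[φ t](congr1 (fun f => f t) e) /conj_hom invgK -!mulgA mulKVg //.
- move=> h; apply: funext => t; rewrite /conj_hom invgK -mulgA h mulKg //.
Qed.

Lemma cond_mul (φ : Γ -> gT) g0 c : cond s φ g0 ->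
  (cond s φ (g0 * c) <-> forall t, φ t * c = c * φ t).
Proof.
move=> c0; split => h δ.
- by have := h δ; rewrite mulgA c0 -!mulgA => /mulgI.
- by rewrite mulgA c0 -!mulgA h.
Qed.

Lemma card_Cx x : #|[set g | condb x g]| = #|'C[x | act]|.
Proof.
have [g0 c0] := val_cond x.
have -> : [set g | condb x g] = mulg g0 @: 'C[x | act].
  apply/setP => g; rewrite inE /condb; apply/asboolP/imsetP.
  - move=> cg; exists (g0^-1 * g); last by rewrite mulKVg.
    apply/astab1P; apply: val_inj; rewrite /= to_val; apply/stab_iff.
    by apply/(cond_mul _ c0); rewrite mulKVg.
  - case=> c /astab1P e ->; apply/(cond_mul _ c0); apply/stab_iff.
    by rewrite -to_val; congr ssval; exact: e.
by rewrite card_imset //; apply: mulgI.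
Qed.

Lemma acts_all : [acts [set: gT], on [set: X] | act].
Proof. by apply/actsP => a _ x; rewrite !inE. Qed.

Lemma sum_stab : \sum_(x : X) #|'C[x | act]| =
   (#|orbit act [set: gT] @: [set: X]| * #|gT|)%N.
Proof.
rewrite -cardsT -(Frobenius_Cauchy acts_all).
transitivity (\sum_(x : X) \sum_(a : gT) ((act x a == x) : nat)).
  apply: eq_bigr => x _; rewrite -sum1_card big_mkcond; apply: eq_bigr => a _.
  case: (boolP (a \in 'C[x | act])) => [/astab1P -> | h]; first by rewrite eqxx.
  by case: eqP => // e; case/negP: h; apply/astab1P.
rewrite exchange_big /=; apply: eq_big => [a|a _]; first by rewrite in_setT.
rewrite -sum1_card [RHS]big_mkcond; apply: eq_bigr => x _.
rewrite in_setI in_setT /=.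
case: (boolP (x \in 'Fix_act[a])) => [/afix1P e | h]; first by rewrite [to x a]e eqxx.
by case: eqP => // e; case/negP: h; apply/afix1P.
Qed.

End Main.

End D.
Import D.

Theorem corollary3p2 (Γ : Grp) (s : GrpAut Γ) (gT : finGroupType)
  (Hfg : fingen (sd_mul s) (sd_one Γ) (sd_inv s)) :
  finite_pred (@Hom_sigma Γ s gT) /\
  exists n m : nat,
    has_card (@is_hom (prod (gcar Γ) Z) (sd_mul s) gT) n /\
    num_orbits (@Hom_sigma Γ s gT) (@conj_equiv Γ gT) m /\
    n = (#|gT| * m)%N /\ (#|gT| %| n)%N.
Proof.
case: Hfg => S HS.
have [lH HlH] := homs_fin gT HS.
split.
  by exists (ls lH) => φ /(mem_ls HlH) /In_mem.
have eqn : size (lH' s lH) = (#|gT| * #|orbit (D.act HlH) [set: gT] @: [set: X lH]|)%N.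
  rewrite size_map -cardE card_C mulnC -sum_stab.
  by apply: eq_bigr => x _; rewrite card_Cx.
exists (size (lH' s lH)), #|orbit (D.act HlH) [set: gT] @: [set: X lH]|.
split; last split.
- exists (lH' s lH); split; first exact/uniq_NoDup/uniq_lH'.
  split => // ψ; rewrite In_mem; exact: mem_lH'.
- have [trT sub inj ex] := orbit_transversalP (G := [set: gT]%G) (acts_all HlH).
  set T := orbit_transversal _ _ _ in trT sub inj ex.
  exists (map val (enum T)); split.
    by rewrite -(card_transversal trT) cardE; exact: length_map.
  split.
    apply/Forall_forall => y /In_mem /mapP [x _ ->]; apply/(mem_ls HlH); exact: valP.
  split.
    move=> φ /(mem_ls HlH) m.
    have [a _ ax] := ex (Sub φ m) (in_setT _).
    exists (val (D.to (Sub φ m) a)); split.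
      by apply/In_mem; apply: map_f; rewrite mem_enum.
    by exists a^-1%g; rewrite (to_val HlH).
  have nd : List.NoDup (map val (enum T)).
    by apply/uniq_NoDup; rewrite map_inj_uniq ?enum_uniq //; apply: val_inj.
  move=> i j y z hi hj [h e].
  have /In_mem/mapP [y' Ty' ey] := nth_error_In _ _ hi.
  have /In_mem/mapP [z' Tz' ez] := nth_error_In _ _ hj.
  rewrite mem_enum in Ty'; rewrite mem_enum in Tz'.
  have ez' : z' = D.to y' h^-1%g.
    by apply: val_inj; rewrite (to_val HlH) invgK -ez -ey.
  have : z' \in orbit (D.act HlH) [set: gT] y' by apply/orbitP; exists h^-1%g; rewrite ?inE.
  rewrite (inj y' z' Ty' Tz') => /eqP eyz.
  have yz : y = z by rewrite ey ez eyz.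
  apply: (proj1 (NoDup_nth_error _) nd); first by apply/nth_error_Some; rewrite hi.
  by rewrite hi hj yz.
- by split => //; rewrite eqn dvdn_mulr.
Qed.
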